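(* Let $\mathcal{X}\in\mathbb{IR}^n$ be a box, $w\in\mathbb{R}^n_{>0}$, and let $f=[f_k]:\mathbb{R}^n\to\mathbb{R}^n$ and $g_p=[g_{p,k}]:\mathbb{R}^n\to\mathbb{R}^n$ ($p\in\{1,\dots,d\}$) be functions such that for every $k\in\{1,\dots,n\}$ and $p\in\{1,\dots,d\}$, $f_k$ and $g_{p,k}$ are Lipschitz on $\mathcal{X}$ with respect to $\|\cdot\|_w$, with Lipschitz constants $L^w_{f_k}\le \overline{f}_k$ and $L^w_{g_{p,k}}\le \overline{g}_{p,k}$ for given numbers $\overline{f}_k,\overline{g}_{p,k}\in\mathbb{R}_+$. Let $\mathscr{E}_j=\{(x^i,C_{\mathcal{F}^i},C_{\mathcal{G}^i})\}_{i=0}^{j-1}$ be a finite set with $x^i\in\mathcal{X}$, $C_{\mathcal{F}^i}=[C_{\mathcal{F}^i_k}]\in\mathbb{IR}^n$ and $C_{\mathcal{G}^i}=[C_{\mathcal{G}^i_{p,k}}]\in\mathbb{IR}^{d\times n}$ satisfying $f_k(x^i)\in C_{\mathcal{F}^i_k}$ and $g_{p,k}(x^i)\in C_{\mathcal{G}^i_{p,k}}$ for all $i$, $p\in\{1,\dots,d\}$, $k\in\{1,\dots,n\}$. Let $\boldsymbol{\eta}^w:\mathbb{IR}^n\to\mathbb{IR}$ be any interval extension of the weighted norm $\|\cdot\|_w$, i.e. $\boldsymbol{\eta}^w(\mathcal{B})\supseteq\{\|y\|_w: y\in\mathcal{B}\}$ for every $\mathcal{B}\in\mathbb{IR}^n$.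 Define interval-valued functions $\boldsymbol{f}=[\boldsymbol{f}_k]$ and $\boldsymbol{g}_p=[\boldsymbol{g}_{p,k}]$ on $\mathbb{IR}^n$ by $$\boldsymbol{f}_k(\mathcal{A})=\bigcap_{i=0}^{j-1}\Big(C_{\mathcal{F}^i_k}+[-1,1]\,\overline{f}_k\,\boldsymbol{\eta}^w(\mathcal{A}-x^i)\Big),\qquad \boldsymbol{g}_{p,k}(\mathcal{A})=\bigcap_{i=0}^{j-1}\Big(C_{\mathcal{G}^i_{p,k}}+[-1,1]\,\overline{g}_{p,k}\,\boldsymbol{\eta}^w(\mathcal{A}-x^i)\Big).$$ Then for every interval $\mathcal{A}\in\mathbb{IR}^n$ with $\mathcal{A}\subseteq\mathcal{X}$, $\{f_k(x):x\in\mathcal{A}\}\subseteq\boldsymbol{f}_k(\mathcal{A})$ and $\{g_{p,k}(x):x\in\mathcal{A}\}\subseteq\boldsymbol{g}_{p,k}(\mathcal{A})$ for all $k\in\{1,\dots,n\}$, $p\in\{1,\dots,d\}$.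
   Context: $\mathbb{IR}$ denotes the set of closed bounded real intervals $[a,b]$, $a\le b$; $\mathbb{IR}^n$ and $\mathbb{IR}^{d\times n}$ denote interval vectors and interval matrices (componentwise). Arithmetic on intervals is standard interval arithmetic: $\mathcal{A}+\mathcal{B}=\{a+b\}$, $\mathcal{A}\mathcal{B}=\{ab\}$, etc., with $a\in\mathcal{A},b\in\mathcal{B}$, and a real number is identified with a degenerate interval; for an interval vector $\mathcal{A}$ and point $x$, $\mathcal{A}-x$ is the componentwise interval difference. Intersections and inclusions of interval vectors/matrices are componentwise. The weighted norm is $\|x\|_w=\sqrt{\sum_{i=1}^n(w_ix_i)^2}$, and the Lipschitz constant of $h:\mathcal{X}\to\mathbb{R}$ with respect to it is $L^w_h=\sup\{L: |h(x)-h(y)|\le L\|x-y\|_w,\ x,y\in\mathcal{X}, x\ne y\}$. *)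

(* Defs.v *)
From HB Require Import structures.
From mathcomp Require Import all_boot all_order all_algebra.
From mathcomp Require Import reals.
Set Implicit Arguments. Unset Strict Implicit. Unset Printing Implicit Defensive.
Import Order.TTheory GRing.Theory Num.Theory.
Local Open Scope ring_scope.

(* A closed bounded real interval [a,b] is represented by its endpoints (a,b);
   it belongs to IR when a <= b. *)
Definition ritv (R : realType) := (R * R)%type.
Definition ritv_wf (R : realType) (A : ritv R) : Prop := A.1 <= A.2.
Definition in_ritv (R : realType) (y : R) (A : ritv R) : Prop := A.1 <= y <= A.2.

Definition pt (R : realType) (n : nat) := 'I_n -> R.
Definition box (R : realType) (n : nat) := 'I_n -> ritv R.
Definition box_wf (R : realType) n (B : box R n) : Prop := forall k, ritv_wf (B k).
Definition in_box (R : realType) n (y : pt R n) (B : box R n) : Prop :=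
  forall k, in_ritv (y k) (B k).
Definition box_sub (R : realType) n (A B : box R n) : Prop :=
  forall k, (B k).1 <= (A k).1 /\ (A k).2 <= (B k).2.
Definition box_subpt (R : realType) n (A : box R n) (x : pt R n) : box R n :=
  fun k => ((A k).1 - x k, (A k).2 - x k).

Definition wnorm (R : realType) n (w x : pt R n) : R :=
  Num.sqrt (\sum_(i < n) (w i * x i) ^+ 2).

Definition wlipschitz_on (R : realType) n (X : box R n) (w : pt R n)
    (h : pt R n -> R) (L : R) : Prop :=
  forall x y, in_box x X -> in_box y X ->
    `|h x - h y| <= L * wnorm w (fun k => x k - y k).

Definition wnorm_ext (R : realType) n (w : pt R n) (eta : box R n -> ritv R) : Prop :=
  forall B, box_wf B -> forall y, in_box y B -> in_ritv (wnorm w y) (eta B).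

(* The (set-valued, exact interval arithmetic) meaning of
   \bigcap_{i<j} ( C^i + [-1,1] * cbar * eta(A - x^i) ). *)
Definition enclosure (R : realType) n j (w : pt R n) (eta : box R n -> ritv R)
    (xs : 'I_j -> pt R n) (C : 'I_j -> ritv R) (cbar : R) (A : box R n) (y : R) : Prop :=
  forall i : 'I_j, exists c t e,
    [/\ in_ritv c (C i), -1 <= t <= 1, in_ritv e (eta (box_subpt A (xs i))) &
        y = c + t * cbar * e].

(* Main.v *)
Require Import Defs.
From mathcomp Require Import all_boot all_order all_algebra.
From mathcomp Require Import reals.
Import Order.TTheory GRing.Theory Num.Theory.
Local Open Scope ring_scope.

Lemma encl_gen (R : realType) (n j : nat) (X : box R n) (w : pt R n)
  (h : pt R n -> R) (L : R) (hL0 : 0 <= L) (hL : wlipschitz_on X w h L)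
  (xs : 'I_j -> pt R n) (hxs : forall i, in_box (xs i) X)
  (C : 'I_j -> ritv R) (hC : forall i, in_ritv (h (xs i)) (C i))
  (eta : box R n -> ritv R) (heta : wnorm_ext w eta)
  (A : box R n) (hA : box_wf A) (hAX : box_sub A X) (x : pt R n) (hx : in_box x A) :
  enclosure w eta xs C L A (h x).
Proof.
move=> i.
have hxX : in_box x X.
  move=> k; have [h1 h2] := hAX k; have /andP[a b] := hx k.
  by apply/andP; split; [apply: le_trans a|apply: le_trans h2].
set e := wnorm w (fun k => x k - xs i k).
have He : in_ritv e (eta (box_subpt A (xs i))).
  apply: heta.
  - by move=> k; rewrite /ritv_wf /box_subpt /=; rewrite lerD2r; exact: hA.
  - move=> k; rewrite /in_ritv /box_subpt /=; have /andP[a b] := hx k.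
    by rewrite !lerD2r a b.
have Hl := hL x (xs i) hxX (hxs i).
have e0 : 0 <= e by rewrite /e /wnorm sqrtr_ge0.
have [Le0|Lne0] := eqVneq (L * e) 0.
  exists (h (xs i)), 0, e; split => //; first by rewrite lerN10 ler01.
  move: Hl; rewrite -/e Le0 normr_le0 subr_eq0 => /eqP ->.
  by rewrite !mul0r addr0.
have Lep : 0 < L * e by rewrite lt_def Lne0 mulr_ge0.
exists (h (xs i)), ((h x - h (xs i)) / (L * e)), e; split => //.
  rewrite -ler_norml normrM normfV (gtr0_norm Lep) ler_pdivrMr // mul1r.
  exact: Hl.
rewrite -(mulrA _ L e) -mulrA mulVf // mulr1.
by rewrite addrC subrK.
Qed.
Theorem lemma1 (R : realType) (n d j : nat)
  (X : box R n) (hX : box_wf X)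
  (w : pt R n) (hw : forall k, 0 < w k)
  (f : 'I_n -> pt R n -> R) (g : 'I_d -> 'I_n -> pt R n -> R)
  (fbar : 'I_n -> R) (gbar : 'I_d -> 'I_n -> R)
  (hfbar : forall k, 0 <= fbar k) (hgbar : forall p k, 0 <= gbar p k)
  (hfL : forall k, wlipschitz_on X w (f k) (fbar k))
  (hgL : forall p k, wlipschitz_on X w (g p k) (gbar p k))
  (xs : 'I_j -> pt R n) (hxs : forall i, in_box (xs i) X)
  (CF : 'I_j -> 'I_n -> ritv R) (CG : 'I_j -> 'I_d -> 'I_n -> ritv R)
  (hCFwf : forall i k, ritv_wf (CF i k)) (hCGwf : forall i p k, ritv_wf (CG i p k))
  (hCF : forall i k, in_ritv (f k (xs i)) (CF i k))
  (hCG : forall i p k, in_ritv (g p k (xs i)) (CG i p k))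
  (eta : box R n -> ritv R) (heta : wnorm_ext w eta) :
  forall A : box R n, box_wf A -> box_sub A X ->
    (forall k x, in_box x A ->
       enclosure w eta xs (fun i => CF i k) (fbar k) A (f k x)) /\
    (forall p k x, in_box x A ->
       enclosure w eta xs (fun i => CG i p k) (gbar p k) A (g p k x)).
Proof.
move=> A hA hAX; split.
- move=> k x hx; exact: (encl_gen _ _ _ _ _ _ _ (hfbar k) (hfL k) _ hxs _ (fun i => hCF i k) _ heta _ hA hAX _ hx).
- move=> p k x hx; exact: (encl_gen _ _ _ _ _ _ _ (hgbar p k) (hgL p k) _ hxs _ (fun i => hCG i p k) _ heta _ hA hAX _ hx).
Qed.
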